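(* Let $n\ge3$ and consider an ontological model in which, for each ontic state $\lambda$, there are response functions $\xi(\cdot|M_i,\lambda)$ on $\{0,1\}$ for binary measurements $M_1,\dots,M_n$ and $\xi(\cdot,\cdot|M_{i,i+1},\lambda)$ on $\{0,1\}^2$ for joint measurements $M_{i,i+1}$ ($i=1,\dots,n$, indices mod $n$), satisfying measurement noncontextuality in the form $\sum_{X_{i+1}}\xi(X_i,X_{i+1}|M_{i,i+1},\lambda)=\xi(X_i|M_i,\lambda)$ and $\sum_{X_i}\xi(X_i,X_{i+1}|M_{i,i+1},\lambda)=\xi(X_{i+1}|M_{i+1},\lambda)$ for all $i$ and all outcomes. Let $\eta(M_i,\lambda)=2\max_{X\in\{0,1\}}\xi(X|M_i,\lambda)-1$. Then for odd $n$, $$\xi(\mathrm{anti}|M_*,\lambda)\equiv\frac1n\sum_{i=1}^n\xi(X_i\ne X_{i+1}|M_{i,i+1},\lambda)\le1-\frac1{n^2}\sum_{i=1}^n\eta(M_i,\lambda),$$ and for even $n\ge4$, $$\xi(\mathrm{chained}|M_*,\lambda)\equiv\frac1n\sum_{i=1}^{n-1}\xi(X_i=X_{i+1}|M_{i,i+1},\lambda)+\frac1n\xi(X_n\ne X_1|M_{n1},\lambda)\le1-\frac1{n^2}\sum_{i=1}^n\eta(M_i,\lambda).$$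
   Context: Here $\xi(X_i\neq X_{i+1}|M_{i,i+1},\lambda)=\xi(0,1|M_{i,i+1},\lambda)+\xi(1,0|M_{i,i+1},\lambda)$ and $\xi(X_i=X_{i+1}|M_{i,i+1},\lambda)=\xi(0,0|M_{i,i+1},\lambda)+\xi(1,1|M_{i,i+1},\lambda)$; all response functions are probability distributions. The same bounds hold for any second family of joint measurements $M'_{i,i+1}$ with the same marginal conditions. *)

(* Defs.v *)
From mathcomp Require Import all_boot all_order all_algebra.
Set Implicit Arguments. Unset Strict Implicit. Unset Printing Implicit Defensive.
Import Order.TTheory GRing.Theory Num.Theory.
Local Open Scope ring_scope.

(* Indices are 0-based: measurement M_{i+1} of the paper is index i : 'I_n,
   and the successor (mod n) of i is [ordS i]. The joint measurement
   M_{i,i+1} is indexed by i, its outcome pair being (X_i, X_{i+1}). *)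

Definition is_distr1 (R : realFieldType) (p : bool -> R) : Prop :=
  (forall x, 0 <= p x) /\ \sum_(x : bool) p x = 1.

Definition is_distr2 (R : realFieldType) (p : bool -> bool -> R) : Prop :=
  (forall x y, 0 <= p x y) /\ \sum_(x : bool) \sum_(y : bool) p x y = 1.

Definition eta (R : realFieldType) (p : bool -> R) : R :=
  2 * Num.max (p false) (p true) - 1.

Definition p_neq (R : realFieldType) (p : bool -> bool -> R) : R :=
  p false true + p true false.
Definition p_eq (R : realFieldType) (p : bool -> bool -> R) : R :=
  p false false + p true true.

(* Main.v *)
Require Import Defs.
From mathcomp Require Import all_boot all_order all_algebra.
From mathcomp Require Import ring lra.
Import Order.TTheory GRing.Theory Num.Theory.
Local Open Scope ring_scope.
Set Implicit Arguments.

Fixpoint tt (R : realFieldType) (S : nat -> R) (k : nat) : R :=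
  match k with 0 => 1 | k'.+1 => - S k' * tt R S k' end.
Arguments tt {R}.

Lemma tt_norm (R : realFieldType) (S : nat -> R) (hS : forall k, `|S k| = 1) k :
  `|tt S k| = 1.
Proof. elim: k => [|k IH] /=; first by rewrite normr1. by rewrite normrM normrN hS IH mulr1. Qed.

Lemma path_bound (R : realFieldType) (F S : nat -> R) (hS : forall k, `|S k| = 1)
  (m1 m2 : nat) : (m1 <= m2)%N ->
  `|tt S m1 * F m1 - tt S m2 * F m2| <= \sum_(m1 <= k < m2) `|F k + S k * F k.+1|.
Proof.
move=> le12; elim: m2 le12 => [|m2 IH].
  by rewrite leqn0 => /eqP ->; rewrite big_geq // subrr normr0.
rewrite leq_eqVlt => /orP [/eqP <-|lt].
  by rewrite big_geq // subrr normr0.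
rewrite big_nat_recr //=.
have := IH lt.
have e : tt S m1 * F m1 - - S m2 * tt S m2 * F m2.+1 =
   (tt S m1 * F m1 - tt S m2 * F m2) + tt S m2 * (F m2 + S m2 * F m2.+1) by ring.
rewrite e => h; apply: (le_trans (ler_normD _ _)); apply: lerD => //.
by rewrite normrM tt_norm // mul1r.
Qed.

Lemma cycle_bound (R : realFieldType) m (b s : 'I_m.+1 -> R)
  (hs : forall i, `|s i| = 1)
  (htn : tt (fun k => s (inord (k %% m.+1))) m.+1 = -1) (i : 'I_m.+1) :
  2 * `|b i| <= \sum_(j < m.+1) `|b j + s j * b (ordS j)|.
Proof.
set S := fun k => s (inord (k %% m.+1)).
set F := fun k => b (inord (k %% m.+1)).
have hS : forall k, `|S k| = 1 by move=> k; exact: hs.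
have eS : \sum_(j < m.+1) `|b j + s j * b (ordS j)| =
          \sum_(0 <= k < m.+1) `|F k + S k * F k.+1|.
  rewrite big_mkord; apply: eq_bigr => j _.
  have ej : inord (j %% m.+1) = j.
    by apply: val_inj; rewrite /= modn_small // inordK // ltn_pmod.
  rewrite /F /S ej; congr (`|_ + _ * b _|).
  by apply: val_inj; rewrite /= inordK ?ltn_pmod //.
rewrite eS (big_cat_nat (n := i)) //=; last by apply: ltnW.
have h1 := @path_bound R F S hS _ _ (leq0n i).
have h2 := @path_bound R F S hS _ _ (ltnW (ltn_ord i)).
rewrite htn /= in h1 h2.
have eF : F m.+1 = F 0 by rewrite /F modnn mod0n.
have eFi : F i = b i.
  by rewrite /F; congr b; apply: val_inj; rewrite /= modn_small // inordK.
rewrite eF mul1r in h1 h2; rewrite eFi in h1 h2.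
have ht := @tt_norm R S hS i.
have -> : 2 * `|b i| = `|(tt S i * b i + F 0) - (F 0 - tt S i * b i)|.
  rewrite (_ : _ - _ = 2 * (tt S i * b i)); last by ring.
  by rewrite normrM normrM ht mul1r ger0_norm.
apply: (le_trans (ler_normB _ _)); rewrite addrC; apply: lerD => //.
by rewrite mulN1r opprK in h2.
Qed.
Lemma eta_eq (R : realFieldType) (p : bool -> R) : is_distr1 p ->
  eta p = `|p true - p false|.
Proof.
move=> [h0 h1]; rewrite big_bool /= in h1; rewrite /eta.
have [h|h] := leP (p false) (p true).
  rewrite ger0_norm ?subr_ge0 //; lra.
rewrite ler0_norm; last by rewrite subr_le0 ltW.
lra.
Qed.

Lemma neq_bound (R : realFieldType) (q : bool -> bool -> R) : is_distr2 q ->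
  p_neq q <= 1 - `|(q true false + q true true - (q false false + q false true))
       + 1 * (q false true + q true true - (q false false + q true false))| / 2.
Proof.
move=> [h0 h1]; rewrite !big_bool /= in h1; rewrite /p_neq.
have := h0 false false; have := h0 true true; have := h0 true false; have := h0 false true.
move=> a b c d.
have [h|h] := leP 0 ((q true false + q true true - (q false false + q false true))
       + 1 * (q false true + q true true - (q false false + q true false))).
  rewrite ger0_norm //; lra.
rewrite ltr0_norm //; lra.
Qed.

Lemma eq_bound (R : realFieldType) (q : bool -> bool -> R) : is_distr2 q ->
  p_eq q <= 1 - `|(q true false + q true true - (q false false + q false true))
       + -1 * (q false true + q true true - (q false false + q true false))| / 2.
Proof.
move=> [h0 h1]; rewrite !big_bool /= in h1; rewrite /p_eq.
have := h0 false false; have := h0 true true; have := h0 true false; have := h0 false true.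
move=> a b c d.
have [h|h] := leP 0 ((q true false + q true true - (q false false + q false true))
       + -1 * (q false true + q true true - (q false false + q true false))).
  rewrite ger0_norm //; lra.
rewrite ltr0_norm //; lra.
Qed.

Lemma final_ineq (R : realFieldType) (N u P S T : R) : 0 < u -> N * u = 1 ->
  P <= N - S / 2 -> 2 * T <= N * S -> u * P <= 1 - u ^+ 2 * T.
Proof.
move=> hu hNu hP hT.
have h1 : u * P <= u * (N - S / 2) by rewrite ler_pM2l.
have h2 : u ^+ 2 * (2 * T) <= u ^+ 2 * (N * S) by rewrite ler_pM2l // exprn_gt0.
have e1 : u * (N - S / 2) = 1 - u * S / 2 by rewrite mulrBr mulrC hNu; ring.
have e2 : u ^+ 2 * (N * S) = u * S by rewrite expr2 -mulrA (mulrA u N) (mulrC u N) hNu mul1r.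
lra.
Qed.

Theorem mainTheorem11 (R : realFieldType) (n : nat) (hn : (3 <= n)%N)
  (xi1 : 'I_n -> bool -> R) (xi2 : 'I_n -> bool -> bool -> R)
  (hd1 : forall i, is_distr1 (xi1 i))
  (hd2 : forall i, is_distr2 (xi2 i))
  (hnc1 : forall i x, \sum_(y : bool) xi2 i x y = xi1 i x)
  (hnc2 : forall i y, \sum_(x : bool) xi2 i x y = xi1 (ordS i) y) :
  (odd n ->
     n%:R^-1 * \sum_(i < n) p_neq (xi2 i)
       <= 1 - (n%:R ^+ 2)^-1 * \sum_(i < n) eta (xi1 i)) /\
  (~~ odd n ->
     n%:R^-1 * (\sum_(i < n | (i : nat) != n.-1) p_eq (xi2 i))
       + n%:R^-1 * (\sum_(i < n | (i : nat) == n.-1) p_neq (xi2 i))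
       <= 1 - (n%:R ^+ 2)^-1 * \sum_(i < n) eta (xi1 i)).
Proof.
case: n hn xi1 xi2 hd1 hd2 hnc1 hnc2 => [//|m] hn xi1 xi2 hd1 hd2 hnc1 hnc2.
set b := fun i => xi1 i true - xi1 i false.
have hb1 : forall i, b i = xi2 i true false + xi2 i true true
                            - (xi2 i false false + xi2 i false true).
  by move=> i; rewrite /b -!hnc1 !big_bool /=; ring.
have hb2 : forall i, b (ordS i) = xi2 i false true + xi2 i true true
                            - (xi2 i false false + xi2 i true false).
  by move=> i; rewrite /b -!hnc2 !big_bool /=; ring.
have hT : \sum_(i < m.+1) eta (xi1 i) = \sum_(i < m.+1) `|b i|.
  by apply: eq_bigr => i _; rewrite eta_eq.
rewrite hT /=.
have hN : 0 < (m.+1)%:R :> R by rewrite ltr0n.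
have hu : 0 < ((m.+1)%:R :> R)^-1 by rewrite invr_gt0.
have hNu : (m.+1)%:R * ((m.+1)%:R :> R)^-1 = 1 by rewrite mulfV // gt_eqF.
have key : forall s : 'I_m.+1 -> R, (forall i, `|s i| = 1) ->
    tt (fun k => s (inord (k %% m.+1))) m.+1 = -1 ->
    forall P : R,
    P <= \sum_(i < m.+1) (1 - `|b i + s i * b (ordS i)| / 2) ->
    ((m.+1)%:R)^-1 * P <= 1 - ((m.+1)%:R ^+ 2)^-1 * \sum_(i < m.+1) `|b i|.
  move=> s hs htn P hP.
  rewrite -exprVn; apply: final_ineq hu hNu _ _.
    apply: (le_trans hP); rewrite sumrB sumr_const card_ord -mulr_suml.
    done.
  rewrite mulr_sumr.
  set SS := \sum_(i < m.+1) `|b i + s i * b (ordS i)|.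
  have -> : (m.+1)%:R * SS = \sum_(i < m.+1) SS by rewrite sumr_const card_ord mulr_natl.
  apply: ler_sum => i _.
  exact: cycle_bound.
split.
- move=> hodd; apply: (key (fun _ => 1)).
  + by move=> _; rewrite normr1.
  + have : forall k, tt (fun k => (fun _ : 'I_m.+1 => (1 : R)) (inord (k %% m.+1))) k
                     = if odd k then -1 else 1.
      elim=> [//|k IH] /=; rewrite IH; by case: (odd k) => /=; rewrite ?mulrN1 ?opprK ?mulr1.
    by move=> ->; move: hodd => /=; case: (odd m).
  + apply: ler_sum => i _; rewrite hb1 hb2; exact: neq_bound.
- move=> heven.
  rewrite -mulrDr.
  apply: (key (fun i : 'I_m.+1 => if (i : nat) == m then 1 else -1)).
  + by move=> i; case: ifP => _; rewrite ?normrN normr1.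
  + have h : forall k, (k <= m)%N ->
      tt (fun k => (fun i : 'I_m.+1 => if (i : nat) == m then (1 : R) else -1)
                     (inord (k %% m.+1))) k = 1.
      elim=> [//|k IH] hk /=; rewrite IH ?(ltnW hk) //.
      rewrite modn_small ?inordK; last 2 first.
        by apply: (ltn_trans hk).
        by apply: (ltn_trans hk).
      by rewrite (ltn_eqF hk) mulr1 opprK.
    by rewrite /= h // modn_small // inordK // eqxx mulr1.
  + rewrite [X in _ <= X](bigID (fun i : 'I_m.+1 => (i : nat) != m)) /=.
    apply: lerD; last rewrite [X in _ <= X](eq_bigl (fun i : 'I_m.+1 => (i:nat) == m));
      last (by move=> i; rewrite negbK); apply: ler_sum => i hi.
      rewrite (negbTE hi) hb1 hb2; exact: eq_bound.
    rewrite hi hb1 hb2; exact: neq_bound.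
Qed.
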